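(* Let $m\ge 2$ be an integer such that $p_1(x)=x^{m+2}+x+1$ is irreducible over $\mathrm{GF}(2)$, and let $F=\mathrm{GF}(2^{m+2})=\mathrm{GF}(2)[x]/(p_1(x))$, whose elements are identified with the polynomials over $\mathrm{GF}(2)$ of degree at most $m+1$. Let $D_0$ be the multiplication table of $F$ (rows and columns indexed by the elements of $F$, entry in row $a$ and column $b$ equal to $ab$ computed in $F$). Let $D_1$ be the $2^{m+2}\times 4$ submatrix of $D_0$ consisting of the columns indexed by $0,1,x,x+1$, and let $D_2$ be the submatrix of $D_1$ consisting of the $2^m$ rows indexed by the elements of $r_{m-2}\cup\big(x^{m+1}+x^m+x^{m-1}+r_{m-2}\big)$. Then: (i) $D_1$ is a difference matrix $D(2^{m+2},2^2,2^{m+2})$ over the additive group of $F$; (ii) $\phi(D_2)$ is a difference matrix $D(2^m,2^2,2^m)$ over the additive group of $\mathrm{GF}(2^m)$.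
   Context: $r_{m-2}$ denotes the set of all polynomials over $\mathrm{GF}(2)$ of degree at most $m-2$, and $q+S=\{q+s:s\in S\}$. A difference matrix $D(b,c,g)$ over a finite abelian group $\mathcal{A}$ of order $g$ is a $b\times c$ array with entries in $\mathcal{A}$ such that, for any two distinct columns, their entrywise difference vector contains every element of $\mathcal{A}$ equally often. Elements of $\mathrm{GF}(2^m)$ are identified (as an additive group) with polynomials over $\mathrm{GF}(2)$ of degree at most $m-1$. The truncation projection $\phi$ maps $a_0+a_1x+\cdots+a_{m+1}x^{m+1}\in F$ to $a_0+a_1x+\cdots+a_{m-1}x^{m-1}$; for an array $D$, $\phi(D)$ is obtained by applying $\phi$ entrywise. *)

(* Defs.v *)
From mathcomp Require Import all_boot all_order all_algebra.
Set Implicit Arguments. Unset Strict Implicit. Unset Printing Implicit Defensive.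
Import GRing.Theory.
Local Open Scope ring_scope.

Definition is_difference_matrix (V : zmodType) (b c g : nat) (A : seq V)
    (D : 'M[V]_(b, c)) : Prop :=
  [/\ uniq A, size A = g, 0 \in A &
      {in A &, forall x y, x - y \in A}] /\
  (forall i j, D i j \in A) /\
  (forall j1 j2 : 'I_c, j1 != j2 ->
        exists lam : nat, forall a, a \in A ->
          #|[set i : 'I_b | D i j1 - D i j2 == a]| = lam).
Arguments is_difference_matrix {V} b c g A D.

(* All polynomials over GF(2) of size at most n (degree at most n-1). *)
Definition polys_lt (n : nat) : seq {poly 'F_2} :=
  [seq Poly (fgraph f) | f <- enum {: {ffun 'I_n -> 'F_2}}].

Definition p1 (m : nat) : {poly 'F_2} := 'X^(m.+2) + 'X + 1.

(* multiplication in F = GF(2)[x]/(p1) on representatives of degree <= m+1 *)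
Definition mulF (m : nat) (a b : {poly 'F_2}) : {poly 'F_2} := (a * b) %% p1 m.

Definition elemsF (m : nat) : seq {poly 'F_2} := polys_lt m.+2.

Definition colsD1 : seq {poly 'F_2} := [:: 0; 1; 'X; 'X + 1].

Definition D1 (m : nat) : 'M[{poly 'F_2}]_(2 ^ m.+2, 4) :=
  \matrix_(i, j) mulF m (nth 0 (elemsF m) i) (nth 0 colsD1 j).

(* r_{m-2} : polynomials of degree at most m-2 *)
Definition r_ (m : nat) : seq {poly 'F_2} := polys_lt (m - 1).

(* rows of D2: the elements of F lying in r_{m-2} ∪ (x^{m+1}+x^m+x^{m-1}+r_{m-2}),
   in the order in which they occur as rows of D1 *)
Definition rowsD2 (m : nat) : seq {poly 'F_2} :=
  [seq a <- elemsF m | (a \in r_ m) ||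
     (a \in [seq 'X^(m.+1) + 'X^m + 'X^(m.-1) + q | q <- r_ m])].

Definition D2 (m : nat) : 'M[{poly 'F_2}]_(2 ^ m, 4) :=
  \matrix_(i, j) mulF m (nth 0 (rowsD2 m) i) (nth 0 colsD1 j).

Definition phi (m : nat) (a : {poly 'F_2}) : {poly 'F_2} := \poly_(i < m) a`_i.

(* Main.v *)
Require Import Defs.
From mathcomp Require Import all_boot all_order all_algebra.
From mathcomp Require Import ring zify.
Import GRing.Theory.
Local Open Scope ring_scope.

Lemma inj_count (V : eqType) (b : nat) (A : seq V) (f : 'I_b -> V) :
  uniq A -> size A = b -> injective f -> (forall i, f i \in A) ->
  forall a, a \in A -> #|[set i | f i == a]| = 1%N.
Proof.
move=> uA sA finj fA a aA.
have uc : uniq (codom f) by rewrite map_inj_uniq ?enum_uniq.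
have sub : {subset codom f <= A} by move=> y /codomP [x ->].
have hs : (size A <= size (codom f))%N by rewrite size_codom card_ord sA.
have [_ eqc] := uniq_min_size uc sub hs.
have /codomP [i ->] : a \in codom f by rewrite eqc.
suff -> : [set j | f j == f i] = [set i] by rewrite cards1.
by apply/setP => j; rewrite !inE; apply/eqP/eqP => [/finj|->].
Qed.

Lemma mem_polys_lt n (p : {poly 'F_2}) : (p \in polys_lt n) = (size p <= n)%N.
Proof.
apply/idP/idP.
  case/mapP => f _ ->; apply: leq_trans (size_Poly _) _.
  by rewrite size_tuple card_ord.
move=> hp; apply/mapP; exists [ffun i : 'I_n => p`_i]; first by rewrite mem_enum.
apply/polyP => i; rewrite coef_Poly.
case: (ltnP i n) => hi.
  by rewrite (nth_fgraph_ord 0 (Ordinal hi)) ffunE.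
rewrite (nth_default 0 (leq_trans hp hi)) nth_default // size_tuple card_ord //.
Qed.

Lemma uniq_polys_lt n : uniq (polys_lt n).
Proof.
rewrite map_inj_uniq ?enum_uniq // => f g h.
apply/ffunP => i; have := congr1 (fun p : {poly 'F_2} => p`_i) h.
by rewrite /= !coef_Poly !nth_fgraph_ord.
Qed.

Lemma size_polys_lt n : size (polys_lt n) = (2 ^ n)%N.
Proof.
by rewrite size_map -cardE card_ffun card_Fp // card_ord.
Qed.

Lemma size_addB (p q : {poly 'F_2}) n : (size p <= n)%N -> (size q <= n)%N ->
  (size (p + q)%R <= n)%N.
Proof. by move=> hp hq; apply: leq_trans (size_polyD _ _) _; rewrite geq_max hp. Qed.

Lemma two0 : (2%:R : {poly 'F_2}) = 0.
Proof. by rewrite -polyC_natr pchar_Fp_0. Qed.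

Lemma addpp (p : {poly 'F_2}) : p + p = 0.
Proof. by rewrite -mulr2n -mulr_natr two0 mulr0. Qed.

Lemma oppF2 (p : {poly 'F_2}) : - p = p.
Proof. by apply/eqP; rewrite eq_sym -subr_eq0 opprK addpp. Qed.

Lemma polys_lt_diff_matrix_props n :
  [/\ uniq (polys_lt n), size (polys_lt n) = (2 ^ n)%N, 0 \in polys_lt n &
      {in polys_lt n &, forall x y, x - y \in polys_lt n}].
Proof.
split; rewrite ?uniq_polys_lt ?size_polys_lt ?mem_polys_lt ?size_poly0 //.
move=> x y; rewrite !mem_polys_lt => hx hy.
by rewrite size_addB // size_opp.
Qed.

Definition cc (j : 'I_4) : {poly 'F_2} := nth 0 colsD1 j.

Lemma cc_inj : injective cc.
Proof.
move=> [[|[|[|[|?]]]] h1] [[|[|[|[|?]]]] h2] //= E; apply: val_inj => //=;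
  move: E => /(congr1 (fun p : {poly 'F_2} => (p`_0, p`_1))) /=;
  rewrite ?coefD ?coefX ?coef1 ?coef0 /= ?addr0 ?add0r => -[] /eqP;
  rewrite ?oner_eq0 ?(eq_sym 0) ?oner_eq0 //= => _ /eqP; rewrite ?oner_eq0 ?(eq_sym 0) ?oner_eq0 //.
Qed.

Lemma size_cc j : (size (cc j) <= 2)%N.
Proof.
case: j => [[|[|[|[|?]]]] h] //=; rewrite /cc /= ?size_poly0 ?size_poly1 ?size_polyX //.
by rewrite size_XaddC.
Qed.

Lemma size_p1 m : size (p1 m) = m.+3.
Proof.
rewrite /p1 size_polyDl; rewrite size_polyDl ?size_polyXn ?size_polyX ?size_poly1 //.
Qed.

Lemma p1_neq0 m : p1 m != 0.
Proof. by rewrite -size_poly_eq0 size_p1. Qed.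

Lemma irr_coprime (p d : {poly 'F_2}) : irreducible_poly p -> d != 0 ->
  (size d < size p)%N -> coprimep p d.
Proof.
move=> [_ hirr] d0 hd; rewrite /coprimep; apply/negPn/negP => hg.
have := hirr _ hg (dvdp_gcdl p d) => /eqp_size hs.
have := dvdp_leq d0 (dvdp_gcdr p d); rewrite hs => h.
by move: (leq_ltn_trans h hd); rewrite ltnn.
Qed.

Lemma modpB' (d p q : {poly 'F_2}) : (p - q) %% d = p %% d - q %% d.
Proof. by rewrite modpD modpN. Qed.

Lemma part1 m (hm : (2 <= m)%N) (hirr : irreducible_poly (p1 m)) :
  is_difference_matrix (2 ^ m.+2)%N 4%N (2 ^ m.+2)%N (elemsF m) (D1 m).
Proof.
split; first exact: polys_lt_diff_matrix_props.
split.
  move=> i j; rewrite mxE /mulF /elemsF mem_polys_lt -ltnS -(size_p1 m).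
  by rewrite ltn_modp p1_neq0.
move=> j1 j2 hj; exists 1%N => a ha.
pose e i := nth 0 (elemsF m) i.
apply: (@inj_count _ _ (elemsF m) (fun i => D1 m i j1 - D1 m i j2)) => //.
- exact: uniq_polys_lt.
- by rewrite size_polys_lt.
- move=> i i'; rewrite !mxE /mulF -!modpB' -!mulrBr => E.
  have d0 : cc j1 - cc j2 != 0 by rewrite subr_eq0; apply: contra hj => /eqP /cc_inj ->.
  have cp : coprimep (p1 m) (cc j1 - cc j2).
    apply: irr_coprime => //; rewrite size_p1.
    apply: (@leq_ltn_trans 2) => //; rewrite size_addB ?size_opp ?size_cc //.
  have : p1 m %| (e i - e i') * (cc j1 - cc j2).
    by rewrite /dvdp mulrBl modpB' E subrr.
  rewrite Gauss_dvdpl // => hdv.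
  have hsz : forall i : 'I_(2 ^ m.+2), (i < size (elemsF m))%N.
    by move=> k; rewrite size_polys_lt.
  have : e i - e i' == 0.
    apply: contraLR hdv => hne; apply/negP => /(dvdp_leq hne).
    rewrite size_p1 leqNgt ltnS size_addB // ?size_opp -mem_polys_lt mem_nth //.
  rewrite subr_eq0 /e nth_uniq ?hsz ?uniq_polys_lt // => /eqP; exact: val_inj.
- move=> i; rewrite !mxE /mulF /elemsF mem_polys_lt.
  rewrite size_addB // ?size_opp -ltnS -(size_p1 m) ltn_modp p1_neq0 //.
Qed.

Definition hh k : {poly 'F_2} := 'X^(k.+2) + 'X^(k.+1) + 'X^k.
Definition isS k (u : {poly 'F_2}) :=
  (size u <= k)%N \/ exists2 q : {poly 'F_2}, (size q <= k)%N & u = hh k + q.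
Definition Pd (d : {poly 'F_2}) := d = 1 \/ d = 'X \/ d = 'X + 1.

Lemma phi_small n (v : {poly 'F_2}) : (size v <= n)%N -> phi n v = v.
Proof.
move=> hv; apply/polyP => i; rewrite coef_poly; case: ltnP => // hi.
by rewrite nth_default // (leq_trans hv hi).
Qed.

Lemma phiB n (u v : {poly 'F_2}) : phi n (u - v) = phi n u - phi n v.
Proof. by apply/polyP => i; rewrite coefB !coef_poly coefB; case: ifP; rewrite ?subr0. Qed.

Lemma size_hh k : size (hh k) = k.+3.
Proof.
rewrite /hh size_polyDl; rewrite size_polyDl ?size_polyXn //.
Qed.

Lemma Pd_neq0 (d : {poly 'F_2}) : Pd d -> d != 0.
Proof.
case=> [->|[->|->]]; rewrite -size_poly_eq0 ?size_poly1 ?size_polyX ?size_XaddC //.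
Qed.

Lemma Pd_size (d : {poly 'F_2}) : Pd d -> (size d <= 2)%N.
Proof. case=> [->|[->|->]]; rewrite ?size_poly1 ?size_polyX ?size_XaddC //. Qed.

Arguments Pd_size {d}. Arguments Pd_neq0 {d}.

Lemma F2_two : (1 + 1 : 'F_2) = 0.
Proof. by rewrite -mulr2n pchar_Fp_0. Qed.

Lemma key k (u d : {poly 'F_2}) : (1 <= k)%N -> isS k u -> u != 0 -> Pd d ->
  phi k.+1 ((u * d) %% p1 k.+1) != 0.
Proof.
move=> hk hS u0 hd.
have sd := Pd_size hd.
case: hS => [hu | [q hq ->]].
  have hs : (size (u * d)%R <= k.+1)%N.
    apply: leq_trans (size_polyMleq _ _) _; move: hu sd; lia.
  have hlt : (size (u * d)%R < size (p1 k.+1))%N by rewrite size_p1; move: hs; lia.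
  rewrite (modp_small hlt).
  by rewrite phi_small // mulf_neq0 // Pd_neq0.
have hsq : (size (q * d)%R <= k.+1)%N.
  apply: leq_trans (size_polyMleq _ _) _; move: hq sd; lia.
have hlt : (size (q * d)%R < size (p1 k.+1))%N by rewrite size_p1; move: hsq; lia.
rewrite mulrDl modpD (modp_small hlt).
case: hd hsq hlt => [->|[->|->]] hsq hlt.
- rewrite !mulr1 modp_small ?size_hh ?size_p1 //.
  apply/eqP => /(congr1 (fun p : {poly 'F_2} => p`_k)).
  rewrite coef_poly ltnSn coef0 coefD (nth_default 0 hq) addr0 /hh !coefD !coefXn.
  have -> : (k == k.+2) = false by apply/eqP; lia.
  have -> : (k == k.+1) = false by apply/eqP; lia.
  by rewrite eqxx => /eqP; rewrite !mulr0n mulr1n !add0r oner_eq0.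
- set r : {poly 'F_2} := 'X^(k.+2) + 'X^(k.+1) - 'X - 1.
  have E : hh k * 'X = p1 k.+1 + r.
    rewrite /hh /p1 /r !exprS; ring.
  have hrs : (size r < size (p1 k.+1))%N.
    rewrite size_p1 ltnS !size_addB ?size_opp ?size_polyXn ?size_polyX ?size_poly1 //; lia.
  have -> : (hh k * 'X) %% p1 k.+1 = r by rewrite E modpD modpp add0r (modp_small hrs).
  apply/eqP => /(congr1 (fun p : {poly 'F_2} => p`_0)).
  rewrite coef_poly coef0 /= coefD coefMX /r !coefB !coefD !coefXn coefX coef1 /=.
  rewrite !subr0 !add0r addr0; apply/eqP; rewrite oppr_eq0 oner_eq0 //.
- set r : {poly 'F_2} := 'X^k - 'X - 1.
  have E : hh k * ('X + 1) = p1 k.+1 + r + ('X^(k.+1) * 'X + 'X^(k.+1)) * 2%:R.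
    rewrite /hh /p1 /r !exprS; ring.
  have hr : (size r <= k.+1)%N.
    rewrite !size_addB ?size_opp ?size_polyXn ?size_polyX ?size_poly1 //; lia.
  have hrs : (size r < size (p1 k.+1))%N by rewrite size_p1; move: hr; lia.
  have -> : (hh k * ('X + 1)) %% p1 k.+1 = r.
    by rewrite E two0 mulr0 addr0 modpD modpp add0r (modp_small hrs).
  rewrite phi_small; last exact: size_addB hr hsq.
  apply/eqP => /(congr1 (fun p : {poly 'F_2} => p.[1])).
  rewrite /r !hornerE expr1n F2_two mulr0 addr0 -addrA -opprD F2_two subr0 => /eqP.
  by rewrite oner_eq0.
Qed.

Lemma cc_diff j1 j2 : j1 != j2 -> Pd (cc j1 - cc j2).
Proof.
have e1 : (1 : {poly 'F_2}) + ('X + 1) = 'X by rewrite addrCA addpp addr0.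
have e2 : ('X : {poly 'F_2}) + ('X + 1) = 1 by rewrite addrA addpp add0r.
have e3 : ('X + 1 : {poly 'F_2}) + 1 = 'X by rewrite -addrA addpp addr0.
have e4 : ('X + 1 : {poly 'F_2}) + 'X = 1 by rewrite addrAC addpp add0r.
have e5 : (1 : {poly 'F_2}) + 'X = 'X + 1 by rewrite addrC.
move: j1 j2 => [[|[|[|[|?]]]] ?] [[|[|[|[|?]]]] ?] //= _; rewrite /cc /= oppF2 /Pd
  ?e1 ?e2 ?e3 ?e4 ?e5 ?addr0 ?add0r;
  solve [by left | by right; left | by right; right].
Qed.

Lemma isS_sub k u v : isS k u -> isS k v -> isS k (u - v).
Proof.
rewrite oppF2 => [[hu|[q1 hq1 ->]] [hv|[q2 hq2 ->]]].
- by left; rewrite size_addB.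
- by right; exists (u + q2); rewrite ?size_addB // addrCA.
- by right; exists (q1 + v); rewrite ?size_addB // addrA.
- left; rewrite addrACA addpp add0r size_addB //.
Qed.

Lemma mem_rowsD2 k a : a \in rowsD2 k.+1 -> isS k a.
Proof.
rewrite /rowsD2 mem_filter /r_ subn1 /= => /andP [/orP [ha|ha] _].
  by move: ha; rewrite mem_polys_lt; left.
by case/mapP: ha => q; rewrite mem_polys_lt => hq ->; right; exists q.
Qed.

Lemma size_rowsD2 k : (2 ^ k.+1 <= size (rowsD2 k.+1))%N.
Proof.
set s1 := polys_lt k ++ [seq hh k + q | q <- polys_lt k].
have -> : (2 ^ k.+1 = size s1)%N.
  by rewrite /s1 size_cat (size_map (fun q => hh k + q)) size_polys_lt expnS mul2n addnn.
apply: uniq_leq_size.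
  rewrite cat_uniq uniq_polys_lt map_inj_uniq ?uniq_polys_lt; last exact: addrI.
  rewrite andbT; apply/hasPn => x /mapP [q]; rewrite !mem_polys_lt => hq ->.
  have hs : size (hh k + q) = k.+3 by rewrite size_polyDl size_hh //; move: hq; lia.
  rewrite hs; lia.
move=> x; rewrite mem_cat /rowsD2 mem_filter /r_ subn1 /= => /orP [] hx.
  rewrite hx /elemsF mem_polys_lt; move: hx; rewrite mem_polys_lt => hx.
  move: hx; lia.
rewrite hx orbT /elemsF mem_polys_lt; case/mapP: hx => q; rewrite mem_polys_lt => hq ->.
have hs : size (hh k + q) = k.+3 by rewrite size_polyDl size_hh //; move: hq; lia.
by rewrite hs /= ltnSn.
Qed.

Lemma part2 m (hm : (2 <= m)%N) :
  is_difference_matrix (2 ^ m)%N 4%N (2 ^ m)%N (polys_lt m) (map_mx (phi m) (D2 m)).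
Proof.
case: m hm => // k hk1; have hk : (1 <= k)%N by [].
split; first exact: polys_lt_diff_matrix_props.
split.
  by move=> i j; rewrite mxE mem_polys_lt size_poly.
move=> j1 j2 hj; exists 1%N => a ha.
pose e i := nth 0 (rowsD2 k.+1) i.
have eD : forall i j, map_mx (phi k.+1) (D2 k.+1) i j = phi k.+1 ((e i * cc j) %% p1 k.+1).
  by move=> i j; rewrite !mxE.
apply: (@inj_count _ _ (polys_lt k.+1)
   (fun i => map_mx (phi k.+1) (D2 k.+1) i j1 - map_mx (phi k.+1) (D2 k.+1) i j2)) => //.
- exact: uniq_polys_lt.
- by rewrite size_polys_lt.
- have hsz : forall i : 'I_(2 ^ k.+1), (i < size (rowsD2 k.+1))%N.
    by move=> i; apply: leq_trans (ltn_ord i) (size_rowsD2 k).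
  move=> i i'; rewrite !eD -!phiB -!modpB' -!mulrBr => E0.
  have E : phi k.+1 (((e i - e i') * (cc j1 - cc j2)) %% p1 k.+1) = 0.
    by rewrite mulrBl modpB' phiB E0 subrr.
  have : e i - e i' == 0.
    apply/negPn/negP => hne.
    have hS : isS k (e i - e i') by apply: isS_sub; apply: mem_rowsD2; rewrite mem_nth.
    have H := @key k _ _ hk hS hne (@cc_diff j1 j2 hj).
    by rewrite E eqxx in H.
  rewrite subr_eq0 /e nth_uniq ?hsz ?filter_uniq ?uniq_polys_lt // => /eqP; exact: val_inj.
- by move=> i; rewrite !mxE mem_polys_lt size_addB // ?size_opp size_poly.
Qed.

Theorem theorem2 (m : nat) (hm : (2 <= m)%N) (hirr : irreducible_poly (p1 m)) :
  is_difference_matrix (2 ^ m.+2)%N 4%N (2 ^ m.+2)%N (elemsF m) (D1 m) /\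
  is_difference_matrix (2 ^ m)%N 4%N (2 ^ m)%N (polys_lt m) (map_mx (phi m) (D2 m)).
Proof. by split; [apply: part1 | apply: part2]. Qed.
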